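(* Let $A$ be a local commutative ring, $N$ its nilradical, $E$ a non-zero $A$-module and $R=A\propto E$ the trivial ring extension of $A$ by $E$. Then $R$ is an fqp-ring if and only if $A$ is an fqp-ring and one of the following holds: (1) $A$ is a valuation domain and $E$ is divisible and uniserial; (2) $NE=0$ and $E$ is divisible and torsionfree as an $A/N$-module, each zero-divisor of $A$ belongs to $N$, and $N^2=0$.
   Context: The trivial ring extension $R=A\propto E$ is the ring with underlying group $A\times E$ and multiplication $(a,e)(a',e')=(aa',ae'+a'e)$. An $A$-module $V$ is $M$-projective if $\mathrm{Hom}_A(V,M)\to\mathrm{Hom}_A(V,M/X)$ is surjective for every submodule $X$ of $M$; $V$ is quasi-projective if it is $V$-projective. A ring is an fqp-ring if every finitely generated ideal is quasi-projective. A module is uniserial if its submodules are totally ordered by inclusion. *)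

(* Defs.v *)
From HB Require Import structures.
From mathcomp Require Import all_boot all_order all_algebra.
Set Implicit Arguments. Unset Strict Implicit. Unset Printing Implicit Defensive.
Import Order.TTheory GRing.Theory Num.Theory.
Local Open Scope ring_scope.

Section TrivExt.
Variables (A : comNzRingType) (E : lmodType A).

Definition triv_ext : Type := (A * E)%type.

HB.instance Definition _ := Choice.on triv_ext.
HB.instance Definition _ := GRing.Zmodule.on triv_ext.

Definition te_one : triv_ext := (1, 0).
Definition te_mul (x y : triv_ext) : triv_ext :=
  (x.1 * y.1, x.1 *: y.2 + y.1 *: x.2).

Lemma te_mulA : associative te_mul.
Proof.
move=> [a e] [b f] [c g]; rewrite /te_mul /=; congr (_, _); first by rewrite mulrA.
rewrite !scalerDr !scalerA addrA [c * a]mulrC [c * b]mulrC.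
by [].
Qed.

Lemma te_mulC : commutative te_mul.
Proof. by move=> [a e] [b f]; rewrite /te_mul /= mulrC addrC. Qed.

Lemma te_mul1 : left_id te_one te_mul.
Proof. by move=> [a e]; rewrite /te_mul /= mul1r scale1r scaler0 addr0. Qed.

Lemma te_mulDl : left_distributive te_mul +%R.
Proof.
move=> [a e] [b f] [c g]; rewrite /te_mul /=; congr (_, _); first by rewrite mulrDl.
rewrite scalerDl scalerDr -!addrA; congr (_ + _); rewrite addrCA; done.
Qed.

Lemma te_one_neq0 : te_one != 0.
Proof. by apply/negP => /eqP [] /eqP; rewrite oner_eq0. Qed.

HB.instance Definition _ :=
  GRing.Zmodule_isComNzRing.Build triv_ext te_mulA te_mulC te_mul1 te_mulDl te_one_neq0.

End TrivExt.

Section RingNotions.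
Variable T : comNzRingType.

Definition is_ideal (I : T -> Prop) : Prop :=
  I 0 /\ (forall x y, I x -> I y -> I (x + y)) /\ (forall r x, I x -> I (r * x)).

Definition gen_ideal (n : nat) (xs : 'I_n -> T) : T -> Prop :=
  fun y => exists rs : 'I_n -> T, y = \sum_(i < n) rs i * xs i.

Definition fg_ideal (I : T -> Prop) : Prop :=
  exists n (xs : 'I_n -> T), forall y, I y <-> gen_ideal xs y.

(* For submodules V, M of the regular T-module T:
   V is M-projective iff for every submodule X of M, every T-linear map
   V -> M/X lifts to a T-linear map V -> M.  A T-linear map V -> M/X is
   represented by a function h : T -> T sending V into M which is T-linear
   modulo X on V; a lift g satisfies g v - h v \in X for v \in V. *)
Definition M_projective (V M : T -> Prop) : Prop :=
  forall X : T -> Prop, is_ideal X -> (forall x, X x -> M x) ->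
  forall h : T -> T,
    (forall v, V v -> M (h v)) ->
    (forall r v w, V v -> V w -> X (h (r * v + w) - (r * h v + h w))) ->
  exists g : T -> T,
    [/\ forall v, V v -> M (g v),
        forall r v w, V v -> V w -> g (r * v + w) = r * g v + g w &
        forall v, V v -> X (g v - h v)].

Definition quasi_projective (V : T -> Prop) : Prop := M_projective V V.

Definition fqp_ring : Prop :=
  forall I : T -> Prop, fg_ideal I -> quasi_projective I.

Definition maximal_ideal (M : T -> Prop) : Prop :=
  [/\ is_ideal M, ~ M 1 &
      forall J : T -> Prop, is_ideal J -> ~ J 1 ->
        (forall x, M x -> J x) -> forall x, J x -> M x].

Definition local_ring : Prop :=
  exists M, maximal_ideal M /\
    forall M', maximal_ideal M' -> forall x, M' x <-> M x.

Definition nilpotent_elt (x : T) : Prop := exists n : nat, x ^+ n = 0.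

Definition zero_divisor (a : T) : Prop := exists b, b != 0 /\ a * b = 0.

Definition regular (a : T) : Prop := forall b, a * b = 0 -> b = 0.

Definition valuation_domain : Prop :=
  (forall a b : T, a * b = 0 -> a = 0 \/ b = 0) /\
  (forall a b : T, (exists c, b = a * c) \/ (exists c, a = b * c)).

End RingNotions.

Section ModuleNotions.
Variables (A : comNzRingType) (E : lmodType A).

Definition is_submodule (S : E -> Prop) : Prop :=
  S 0 /\ (forall x y, S x -> S y -> S (x + y)) /\ (forall (r : A) x, S x -> S (r *: x)).

Definition uniserial : Prop :=
  forall S1 S2 : E -> Prop, is_submodule S1 -> is_submodule S2 ->
    (forall x, S1 x -> S2 x) \/ (forall x, S2 x -> S1 x).

Definition divisible : Prop :=
  forall a : A, regular a -> forall e : E, exists e', e = a *: e'.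

(* a is regular in A/N, N the nilradical: ab ∈ N -> b ∈ N *)
Definition regular_mod_nil (a : A) : Prop :=
  forall b, nilpotent_elt (a * b) -> nilpotent_elt b.

(* E viewed as an A/N-module (meaningful when NE = 0) *)
Definition divisible_mod_nil : Prop :=
  forall a : A, regular_mod_nil a -> forall e : E, exists e', e = a *: e'.

Definition torsionfree_mod_nil : Prop :=
  forall (a : A) (e : E), regular_mod_nil a -> a *: e = 0 -> e = 0.

End ModuleNotions.

(* Main.v *)
Require Import Defs.
From HB Require Import structures.
From mathcomp Require Import all_boot all_order all_algebra.
From Stdlib Require Import Classical ClassicalEpsilon.
From mathcomp Require Import ring.
From mathcomp Require classical_sets.
Set Implicit Arguments. Unset Strict Implicit. Unset Printing Implicit Defensive.
Import GRing.Theory.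
Local Open Scope ring_scope.


Section Gen.
Variable T : comNzRingType.
Implicit Types (x y z r s u : T) (V W X I : T -> Prop).

Lemma qp_ext V W : (forall y, V y <-> W y) -> quasi_projective V -> quasi_projective W.
Proof.
move=> VW qV X idX XW h hW hl.
have [g [g1 g2 g3]] := qV X idX (fun x Xx => proj2 (VW _) (XW _ Xx)) h
  (fun v Vv => proj2 (VW _) (hW v (proj1 (VW _) Vv)))
  (fun r v w Vv Vw => hl r v w (proj1 (VW _) Vv) (proj1 (VW _) Vw)).
exists g; split => [v Wv|r v w Wv Ww|v Wv].
- exact/VW/g1/VW.
- by apply: g2; apply/VW.
- by apply: g3; apply/VW.
Qed.

Lemma ideal0 I : is_ideal I -> I 0.
Proof. by case. Qed.
Lemma idealD I x y : is_ideal I -> I x -> I y -> I (x + y).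
Proof. by case=> _ [+ _]; apply. Qed.
Lemma idealM I r x : is_ideal I -> I x -> I (r * x).
Proof. by case=> _ [_ +]; apply. Qed.
Lemma idealMr I r x : is_ideal I -> I x -> I (x * r).
Proof. by move=> iI Ix; rewrite mulrC; apply: idealM. Qed.
Lemma idealN I x : is_ideal I -> I x -> I (- x).
Proof. by move=> iI Ix; rewrite -mulN1r; apply: idealM. Qed.
Lemma idealB I x y : is_ideal I -> I x -> I y -> I (x - y).
Proof. by move=> iI Ix Iy; apply: idealD => //; apply: idealN. Qed.
Lemma ideal_sum I n (F : 'I_n -> T) : is_ideal I -> (forall i, I (F i)) -> I (\sum_(i < n) F i).
Proof.
move=> iI HF; apply: (big_ind I) => //; first exact: ideal0.
by move=> a b; apply: idealD.
Qed.

Lemma h0X V X (h : T -> T) : is_ideal X -> V 0 ->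
  (forall r v w, V v -> V w -> X (h (r * v + w) - (r * h v + h w))) -> X (h 0).
Proof.
move=> iX V0 hl; have := hl 1 0 0 V0 V0.
rewrite mulr0 addr0 mul1r opprD addrA subrr add0r => /(idealN iX); by rewrite opprK.
Qed.

Definition pspan z : T -> Prop := fun y => exists r, y = r * z.

Lemma pspan_ideal z : is_ideal (pspan z).
Proof.
split; first by exists 0; rewrite mul0r.
split; first by move=> _ _ [a ->] [b ->]; exists (a + b); rewrite mulrDl.
by move=> r _ [a ->]; exists (r * a); rewrite mulrA.
Qed.

Lemma qp_principal z : quasi_projective (pspan z).
Proof.
move=> X iX XV h hV hl.
have cfP v : exists r, pspan z v -> v = r * z.
  by case: (classic (pspan z v)) => [[r ->]|nv]; [exists r|exists 0].
pose cf v := proj1_sig (constructive_indefinite_description _ (cfP v)).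
have cfE v : pspan z v -> v = cf v * z := proj2_sig (constructive_indefinite_description _ (cfP v)).
have Vz : pspan z z by exists 1; rewrite mul1r.
have [t ht] := hV z Vz.
exists (fun v => cf v * h z); split.
- by move=> v _; rewrite ht; exists (cf v * t); rewrite mulrA.
- move=> r v w Vv Vw.
  have Vrvw : pspan z (r * v + w) := idealD (pspan_ideal z) (idealM r (pspan_ideal z) Vv) Vw.
  have e : (cf (r * v + w) - (r * cf v + cf w)) * z = 0.
    by rewrite mulrBl -(cfE _ Vrvw) mulrDl -mulrA -(cfE _ Vv) -(cfE _ Vw) subrr.
  rewrite ht; apply/eqP; rewrite -subr_eq0; apply/eqP.
  transitivity (t * ((cf (r * v + w) - (r * cf v + cf w)) * z)); first by ring.
  by rewrite e mulr0.
- move=> v Vv.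
  have := hl (cf v) z 0 Vz (ideal0 (pspan_ideal z)).
  rewrite addr0 -(cfE _ Vv) => Xd.
  have X0 := h0X iX (ideal0 (pspan_ideal z)) hl.
  have -> : cf v * h z - h v = - ((h v - (cf v * h z + h 0)) + h 0) by ring.
  exact: idealN iX (idealD iX Xd X0).
Qed.

Lemma gen_ideal_ideal n (xs : 'I_n -> T) : is_ideal (gen_ideal xs).
Proof.
split; first by exists (fun=> 0); rewrite big1 // => i _; rewrite mul0r.
split.
- move=> _ _ [a ->] [b ->]; exists (fun i => a i + b i).
  by rewrite -big_split /=; apply: eq_bigr => i _; rewrite mulrDl.
- move=> r _ [a ->]; exists (fun i => r * a i).
  by rewrite mulr_sumr; apply: eq_bigr => i _; rewrite mulrA.
Qed.

Lemma gen_mem n (xs : 'I_n -> T) j : gen_ideal xs (xs j).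
Proof.
exists (fun i => if i == j then 1 else 0).
by rewrite (bigD1 j) //= eqxx mul1r big1 ?addr0 // => i /negbTE ->; rewrite mul0r.
Qed.

Lemma gen_pspan n (xs : 'I_n -> T) z : (forall i, pspan z (xs i)) -> gen_ideal xs z ->
  forall y, gen_ideal xs y <-> pspan z y.
Proof.
move=> Hi Hz y; split.
- case=> rs ->; apply: ideal_sum (pspan_ideal z) _ => i; exact: idealM (pspan_ideal z) (Hi i).
- case=> r ->; exact: idealM (gen_ideal_ideal xs) Hz.
Qed.

Definition chained := forall x y : T, (exists c, y = c * x) \/ (exists c, x = c * y).

Lemma ord_cases n (i : 'I_n.+1) : i = ord_max \/ exists j : 'I_n, i = widen_ord (leqnSn n) j.
Proof.
case: (ltnP i n) => h.
- by right; exists (Ordinal h); apply: val_inj.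
- by left; apply: val_inj => /=; apply/eqP; rewrite eqn_leq h andbT -ltnS ltn_ord.
Qed.

Lemma chained_principal : chained -> forall n (xs : 'I_n -> T),
  exists z, forall y, gen_ideal xs y <-> pspan z y.
Proof.
move=> ch; elim=> [|n IH] xs.
- exists 0 => y; split.
  + by case=> rs ->; rewrite big_ord0; exists 0; rewrite mul0r.
  + by case=> r ->; exists (fun=> 0); rewrite big_ord0 mulr0.
- have [z' Hz'] := IH (fun j => xs (widen_ord (leqnSn n) j)).
  have zin : gen_ideal xs z'.
    have [rs ->] := proj2 (Hz' z') (ex_intro _ 1 (esym (mul1r z'))).
    apply: ideal_sum (gen_ideal_ideal xs) _ => i.
    exact: idealM (gen_ideal_ideal xs) (gen_mem xs _).
  case: (ch z' (xs ord_max)) => [[c hc]|[c hc]].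
  + exists z'; apply: gen_pspan zin => i; case: (ord_cases i) => [->|[j ->]].
    * by exists c.
    * by apply/Hz'; exact: (gen_mem (fun j => xs (widen_ord (leqnSn n) j)) j).
  + exists (xs ord_max); apply: gen_pspan (gen_mem xs _) => i.
    case: (ord_cases i) => [->|[j ->]].
    * by exists 1; rewrite mul1r.
    * have [a ha] := proj1 (Hz' _) (gen_mem (fun j => xs (widen_ord (leqnSn n) j)) j).
      by exists (a * c); rewrite /= in ha; rewrite ha hc mulrA.
Qed.

Lemma chained_fqp : chained -> fqp_ring T.
Proof.
move=> ch I [n [xs Hxs]]; have [z Hz] := chained_principal ch xs.
apply: (@qp_ext (pspan z)); last exact: qp_principal.
by move=> y; split => [/Hz/Hxs|/Hxs/Hz].
Qed.

Definition span2 x y : T -> Prop := fun z => exists r s, z = r * x + s * y.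

Lemma span2_ideal x y : is_ideal (span2 x y).
Proof.
split; first by exists 0, 0; rewrite !mul0r addr0.
split.
- by move=> _ _ [r [s ->]] [r' [s' ->]]; exists (r + r'), (s + s'); ring.
- by move=> t _ [r [s ->]]; exists (t * r), (t * s); ring.
Qed.

Lemma fqp_span2 x y : fqp_ring T -> quasi_projective (span2 x y).
Proof.
move=> fq; apply: fq.
exists 2, (fun i : 'I_2 => if i == ord0 then x else y) => z; split.
- case=> r [s ->]; exists (fun i : 'I_2 => if i == ord0 then r else s).
  by rewrite big_ord_recr big_ord_recr big_ord0 /= add0r.
- case=> rs ->; exists (rs ord0), (rs ord_max).
  rewrite big_ord_recr big_ord_recr big_ord0 /= add0r.
  by congr (rs _ * _ + _); apply: val_inj.
Qed.

Definition ldata (P : T -> Prop) :=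
  [/\ is_ideal P, ~ P 1 & forall u, ~ P u -> exists v, u * v = 1].
Definition incomp x y := ~ (exists c, y = c * x) /\ ~ (exists c, x = c * y).

Lemma ldata_unit1 P p : ldata P -> P p -> exists v, (1 + p) * v = 1.
Proof.
case=> iP n1 un Pp; apply: un => P1p; apply: n1.
by have := idealB iP P1p Pp; rewrite addrK.
Qed.

Lemma coordP P x y r s r' s' : ldata P -> incomp x y ->
  r * x + s * y = r' * x + s' * y -> P (r - r') /\ P (s - s').
Proof.
case=> iP n1 un [nyx nxy] e.
have e1 : (r - r') * x = (s' - s) * y.
  apply/eqP; rewrite -subr_eq0; apply/eqP.
  transitivity ((r * x + s * y) - (r' * x + s' * y)); first by ring.
  by rewrite e subrr.
have e2 : (s - s') * y = (r' - r) * x.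
  apply/eqP; rewrite -subr_eq0; apply/eqP.
  transitivity ((r * x + s * y) - (r' * x + s' * y)); first by ring.
  by rewrite e subrr.
split; apply: NNPP => nP; have [v hv] := un _ nP.
- apply: nxy; exists (v * (s' - s)).
  by rewrite -mulrA -e1 mulrA [v * _]mulrC hv mul1r.
- apply: nyx; exists (v * (r' - r)).
  by rewrite -mulrA -e2 mulrA [v * _]mulrC hv mul1r.
Qed.

Definition inPX P x y z := exists p q, [/\ P p, P q & z = p * x + q * y].

Lemma inPX_ideal P x y : ldata P -> is_ideal (inPX P x y).
Proof.
case=> iP _ _; split; first by exists 0, 0; split; [exact: ideal0|exact: ideal0|ring].
split.
- move=> _ _ [p [q [Pp Pq ->]]] [p' [q' [Pp' Pq' ->]]]; exists (p + p'), (q + q').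
  by split; [exact: idealD|exact: idealD|ring].
- move=> t _ [p [q [Pp Pq ->]]]; exists (t * p), (t * q).
  by split; [exact: idealM|exact: idealM|ring].
Qed.

Lemma lin_g0 V (g : T -> T) : V 0 ->
  (forall r v w, V v -> V w -> g (r * v + w) = r * g v + g w) -> g 0 = 0.
Proof.
move=> V0 g2; have := g2 1 0 0 V0 V0; rewrite mulr0 addr0 mul1r => e.
by apply: (addrI (g 0)); rewrite addr0 -e.
Qed.

Lemma swap P x y a b c d : ldata P -> incomp x y -> quasi_projective (span2 x y) ->
  exists gx gy, [/\ inPX P x y (gx - (a * x + b * y)), inPX P x y (gy - (c * x + d * y)) &
     forall r s, r * x + s * y = 0 -> r * gx + s * gy = 0].
Proof.
move=> lP inc qp; have [iP _ _] := lP.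
have iX := inPX_ideal x y lP.
have sp := span2_ideal x y.
have XV : forall z, inPX P x y z -> span2 x y z by move=> z [p [q [_ _ ->]]]; exists p, q.
have cfP v : exists rs : T * T, span2 x y v -> v = rs.1 * x + rs.2 * y.
  by case: (classic (span2 x y v)) => [[r [s ->]]|nv]; [exists (r, s)|exists (0, 0)].
pose cf v := proj1_sig (constructive_indefinite_description _ (cfP v)).
have cfE v : span2 x y v -> v = (cf v).1 * x + (cf v).2 * y :=
  proj2_sig (constructive_indefinite_description _ (cfP v)).
pose h v := ((cf v).1 * a + (cf v).2 * c) * x + ((cf v).1 * b + (cf v).2 * d) * y.
have hV v : span2 x y v -> span2 x y (h v) by move=> _; eexists; eexists.
have hl r v w : span2 x y v -> span2 x y w -> inPX P x y (h (r * v + w) - (r * h v + h w)).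
  move=> Vv Vw.
  have Vrvw : span2 x y (r * v + w) := idealD sp (idealM r sp Vv) Vw.
  have E1 := cfE _ Vrvw; have E2 := cfE _ Vv; have E3 := cfE _ Vw.
  rewrite /h; set u1 := (cf (r * v + w)).1; set u2 := (cf (r * v + w)).2.
  set v1 := (cf v).1; set v2 := (cf v).2; set w1 := (cf w).1; set w2 := (cf w).2.
  fold u1 u2 in E1; fold v1 v2 in E2; fold w1 w2 in E3.
  have e : u1 * x + u2 * y = (r * v1 + w1) * x + (r * v2 + w2) * y.
    by rewrite -E1 {1}E2 {1}E3; ring.
  have [P1 P2] := coordP lP inc e.
  exists ((u1 - (r * v1 + w1)) * a + (u2 - (r * v2 + w2)) * c),
         ((u1 - (r * v1 + w1)) * b + (u2 - (r * v2 + w2)) * d).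
  split; [apply: (idealD iP); apply: (idealMr _ iP) => //|apply: (idealD iP); apply: (idealMr _ iP) => //|ring].
have [g [g1 g2 g3]] := qp _ iX XV h hV hl.
have Vx : span2 x y x by exists 1, 0; ring.
have Vy : span2 x y y by exists 0, 1; ring.
have g0 : g 0 = 0 := lin_g0 (ideal0 sp) g2.
exists (g x), (g y); split.
- have ex : (cf x).1 * x + (cf x).2 * y = 1 * x + 0 * y by rewrite -cfE //; ring.
  have [P1 P2] := coordP lP inc ex.
  have -> : g x - (a * x + b * y) = (g x - h x) +
     ((((cf x).1 - 1) * a + ((cf x).2 - 0) * c) * x + (((cf x).1 - 1) * b + ((cf x).2 - 0) * d) * y).
    by rewrite /h; ring.
  apply: idealD iX (g3 _ Vx) _; eexists; eexists; split; last reflexivity;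
    apply: (idealD iP); apply: (idealMr _ iP) => //.
- have ey : (cf y).1 * x + (cf y).2 * y = 0 * x + 1 * y by rewrite -cfE //; ring.
  have [P1 P2] := coordP lP inc ey.
  have -> : g y - (c * x + d * y) = (g y - h y) +
     ((((cf y).1 - 0) * a + ((cf y).2 - 1) * c) * x + (((cf y).1 - 0) * b + ((cf y).2 - 1) * d) * y).
    by rewrite /h; ring.
  apply: idealD iX (g3 _ Vy) _; eexists; eexists; split; last reflexivity;
    apply: (idealD iP); apply: (idealMr _ iP) => //.
- move=> r s e.
  have Vsy : span2 x y (s * y) := idealM s sp Vy.
  have := g2 r x (s * y) Vx Vsy; rewrite e g0.
  have := g2 s y 0 Vy (ideal0 sp); rewrite addr0 g0 addr0 => ->.
  by move=> ->.
Qed.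

Lemma nak1 P z p w : ldata P -> P p -> z = p * z + w -> exists u, z = u * w.
Proof.
move=> lP Pp e; have [iP _ _] := lP.
have [v hv] := ldata_unit1 lP (idealN iP Pp).
have e' : (1 - p) * z = w by rewrite mulrBl mul1r {1}e; ring.
by exists v; rewrite -e' mulrA [v * _]mulrC hv mul1r.
Qed.

Lemma nak2 P A B al be ga de : ldata P -> P al -> P be -> P ga -> P de ->
  A = al * A + be * B -> B = ga * A + de * B -> A = 0 /\ B = 0.
Proof.
move=> lP Pa Pb Pg Pd eA eB; have [iP _ _] := lP.
have [u hu] := nak1 lP Pa eA.
have eB' : B = (ga * u * be + de) * B + 0 by rewrite {1}eB hu; ring.
have PB : P (ga * u * be + de) by apply: (idealD iP) => //; apply: (idealM _ iP).
have [u' hu'] := nak1 lP PB eB'.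
have B0 : B = 0 by rewrite hu' mulr0.
by split => //; rewrite hu B0 !mulr0.
Qed.

Lemma nak3 P A B C a1 a2 a3 b1 b2 b3 c1 c2 c3 : ldata P ->
  P a1 -> P a2 -> P a3 -> P b1 -> P b2 -> P b3 -> P c1 -> P c2 -> P c3 ->
  A = a1 * A + a2 * B + a3 * C -> B = b1 * A + b2 * B + b3 * C ->
  C = c1 * A + c2 * B + c3 * C -> [/\ A = 0, B = 0 & C = 0].
Proof.
move=> lP Pa1 Pa2 Pa3 Pb1 Pb2 Pb3 Pc1 Pc2 Pc3 eA eB eC; have [iP _ _] := lP.
have eC' : C = c3 * C + (c1 * A + c2 * B) by rewrite {1}eC; ring.
have [u hu] := nak1 lP Pc3 eC'.
have eA' : A = (a1 + a3 * u * c1) * A + (a2 + a3 * u * c2) * B by rewrite {1}eA hu; ring.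
have eB' : B = (b1 + b3 * u * c1) * A + (b2 + b3 * u * c2) * B by rewrite {1}eB hu; ring.
have PP : forall p q, P p -> P q -> P (p + q * u * c1) /\ P (p + q * u * c2).
  by move=> p q Pp Pq; split; apply: (idealD iP) => //; apply: (idealMr _ iP);
     apply: (idealMr _ iP).
have [Q1 Q2] := PP _ _ Pa1 Pa3; have [Q3 Q4] := PP _ _ Pb1 Pb3.
have [Q5 Q6] := PP _ _ Pa2 Pa3; have [Q7 Q8] := PP _ _ Pb2 Pb3.
have [A0 B0] := nak2 lP Q1 Q6 Q3 Q8 eA' eB'.
by split => //; rewrite hu A0 B0; ring.
Qed.

Lemma core P x y : ldata P -> incomp x y -> quasi_projective (span2 x y) ->
  [/\ x * x = 0, x * y = 0 & y * y = 0].
Proof.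
move=> lP inc qp; have [iP _ _] := lP.
have rel gx gy : (forall r s, r * x + s * y = 0 -> r * gx + s * gy = 0) -> y * gx + (- x) * gy = 0.
  by move=> H; apply: H; ring.
have gE P' z w : inPX P' x y (z - w) -> exists p q, [/\ P' p, P' q & z = w + (p * x + q * y)].
  case=> p [q [Pp Pq e]]; exists p, q; split => //; by rewrite -e addrC subrK.
have [gx [gy [/gE [p1 [p2 [P1 P2 ex]]] /gE [p3 [p4 [P3 P4 ey]]] R]]] := swap 0 1 0 0 lP inc qp.
have [gx' [gy' [/gE [q1 [q2 [Q1 Q2 ex']]] /gE [q3 [q4 [Q3 Q4 ey']]] R']]] := swap 0 0 1 0 lP inc qp.
have [gx'' [gy'' [/gE [s1 [s2 [S1 S2 ex'']]] /gE [s3 [s4 [S3 S4 ey'']]] R'']]] := swap 1 0 0 0 lP inc qp.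
have r1 := rel _ _ R; have r2 := rel _ _ R'; have r3 := rel _ _ R''.
rewrite ex ey in r1; rewrite ex' ey' in r2; rewrite ex'' ey'' in r3.
have eA : x * x = (- q3) * (x * x) + (q1 - q4) * (x * y) + q2 * (y * y).
  by apply/eqP; rewrite -subr_eq0; apply/eqP; rewrite -oppr0 -r2; ring.
have eB : x * y = s3 * (x * x) + (s4 - s1) * (x * y) + (- s2) * (y * y).
  by apply/eqP; rewrite -subr_eq0; apply/eqP; rewrite -r3; ring.
have eC : y * y = p3 * (x * x) + (p4 - p1) * (x * y) + (- p2) * (y * y).
  by apply/eqP; rewrite -subr_eq0; apply/eqP; rewrite -r1; ring.
apply: (nak3 lP _ _ _ _ _ _ _ _ _ eA eB eC);
  by [apply: (idealN iP) | apply: (idealB iP) | idtac].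
Qed.


Lemma incomp_sym x y : incomp x y -> incomp y x.
Proof. by case. Qed.

Lemma ann_swap P x y : ldata P -> incomp x y -> quasi_projective (span2 x y) ->
  exists p q, [/\ P p, P q & forall t, t * x = 0 -> t * (y + (p * x + q * y)) = 0].
Proof.
move=> lP inc qp.
have [gx [gy [[p [q [Pp Pq e]]] _ R]]] := swap 0 1 0 0 lP inc qp.
exists p, q; split => // t tx.
have -> : y + (p * x + q * y) = gx by rewrite -e; ring.
by have := R t 0; rewrite tx mul0r addr0 => /(_ erefl); rewrite mul0r addr0.
Qed.


Lemma gen_incl n m (xs : 'I_n -> T) (ys : 'I_m -> T) :
  (forall i, gen_ideal ys (xs i)) -> forall y, gen_ideal xs y -> gen_ideal ys y.
Proof.
move=> H y [rs ->]; apply: ideal_sum (gen_ideal_ideal ys) _ => i.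
exact: (idealM _ (gen_ideal_ideal ys) (H i)).
Qed.

End Gen.

Module ZlM.
Import classical_sets.


Lemma local_ldata (T : comNzRingType) : local_ring T -> exists P : T -> Prop, ldata P.
Proof.
case=> M [[iM nM1 maxM] uniq]; exists M; split => // u nMu.
apply: NNPP => nunit.
pose Pf (B : set T) := B = set0 \/ [/\ is_ideal B, ~ B 1 & B u].
have memb : forall (F : set (set T)) X z, (F `<=` Pf)%classic -> F X -> X z ->
    [/\ is_ideal X, ~ X 1 & X u].
  move=> F X z FP FX Xz; case: (FP X FX) => // X0; by rewrite X0 in Xz.
have chain : forall F : set (set T), (F `<=` Pf)%classic -> total_on F subset ->
    Pf (\bigcup_(X in F) X)%classic.
  move=> F FP tot; case: (classic (exists z, (\bigcup_(X in F) X)%classic z)) => [[z [X0 FX0 X0z]]|nz].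
  - right; have [iX0 nX01 X0u] := memb F X0 z FP FX0 X0z; split.
    + split; first by exists X0 => //; exact: ideal0.
      split.
      * move=> a b [X1 FX1 X1a] [X2 FX2 X2b].
        case: (tot X1 X2 FX1 FX2) => sub.
        - exists X2 => //; have [iX2 _ _] := memb F X2 b FP FX2 X2b.
          by apply: (idealD iX2) => //; apply: sub.
        - exists X1 => //; have [iX1 _ _] := memb F X1 a FP FX1 X1a.
          by apply: (idealD iX1) => //; apply: sub.
      * move=> r a [X1 FX1 X1a]; exists X1 => //.
        have [iX1 _ _] := memb F X1 a FP FX1 X1a; exact: (idealM _ iX1).
    + by move=> [X1 FX1 X11]; have [_ n1 _] := memb F X1 1 FP FX1 X11.
    + by exists X0.
  - left; apply/seteqP; split => [z Hz|z []] //.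
    by apply: nz; exists z.
have [A0 [PA0 maxA0]] := Zorn_bigcup chain.
have Ju : Pf (pspan u).
  right; split; [exact: pspan_ideal| |by exists 1; rewrite mul1r].
  by case=> r e; apply: nunit; exists r; rewrite mulrC -e.
have [iA nA1 Au] : [/\ is_ideal A0, ~ A0 1 & A0 u].
  case: PA0 => // A00; exfalso; apply: (maxA0 (pspan u)) => //; rewrite A00; split.
  - by move=> z [].
  - by move=> sub; apply: (sub u); exists 1; rewrite mul1r.
have mA : maximal_ideal A0.
  split => // J iJ nJ1 sub x Jx; apply: NNPP => nAx.
  apply: (maxA0 J); last by right; split => //; apply: sub.
  split; first by move=> z /sub.
  by move=> Js; apply: nAx; apply: Js.
by apply: nMu; apply/(uniq A0 mA).
Qed.

End ZlM.
Import ZlM.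


Section Te.
Variables (A : comNzRingType) (E : lmodType A).
Local Notation R := (triv_ext E).

Lemma teM (a b : A) (e f : E) : ((a, e) : R) * (b, f) = (a * b, a *: f + b *: e).
Proof. by []. Qed.
Lemma teD (a b : A) (e f : E) : ((a, e) : R) + (b, f) = (a + b, e + f).
Proof. by []. Qed.
Lemma teN (a : A) (e : E) : - ((a, e) : R) = (- a, - e).
Proof. by []. Qed.
Lemma te0 : (0 : R) = (0, 0). Proof. by []. Qed.
Lemma te1 : (1 : R) = (1, 0). Proof. by []. Qed.
Lemma fstM (x y : R) : (x * y).1 = x.1 * y.1. Proof. by []. Qed.
Lemma sndM (x y : R) : (x * y).2 = x.1 *: y.2 + y.1 *: x.2. Proof. by []. Qed.
Lemma fstD (x y : R) : (x + y).1 = x.1 + y.1. Proof. by []. Qed.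
Lemma sndD (x y : R) : (x + y).2 = x.2 + y.2. Proof. by []. Qed.
Lemma fstN (x : R) : (- x).1 = - x.1. Proof. by []. Qed.
Lemma sndN (x : R) : (- x).2 = - x.2. Proof. by []. Qed.
Lemma fstB (x y : R) : (x - y).1 = x.1 - y.1. Proof. by []. Qed.
Lemma sndB (x y : R) : (x - y).2 = x.2 - y.2. Proof. by []. Qed.

Lemma te_sum n (F : 'I_n -> R) : \sum_(i < n) F i = (\sum_(i < n) (F i).1, \sum_(i < n) (F i).2).
Proof.
elim: n F => [|n IH] F; first by rewrite !big_ord0.
by rewrite !big_ord_recr /= IH.
Qed.

Lemma ldata_te P : ldata P -> ldata (fun x : R => P x.1).
Proof.
case=> iP n1 un; split.
- split; first exact: (ideal0 iP).
  split; first by move=> x y Px Py; rewrite fstD; apply: (idealD iP).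
  by move=> r x Px; rewrite fstM; apply: (idealM _ iP).
- by [].
- case=> u e /= nPu; have [v hv] := un _ nPu.
  exists (v, - (v * v) *: e); rewrite teM hv te1; congr (_, _).
  by rewrite scalerA mulrN mulrA hv mul1r scaleNr addNr.
Qed.

Lemma fqp_A : fqp_ring R -> fqp_ring A.
Proof.
move=> fq I [n [xs Hxs]].
pose Xs i : R := (xs i, 0).
have qI' := fq (gen_ideal Xs) (ex_intro _ n (ex_intro _ Xs (fun y => iff_refl _))).
have key : forall d u (f : E), gen_ideal xs d -> gen_ideal xs u -> gen_ideal Xs ((d, u *: f) : R).
  move=> d u f [c ->] [c' ->]; exists (fun i => ((c i, c' i *: f) : R)).
  rewrite te_sum /=; congr (_, _).
  rewrite scaler_suml; apply: eq_bigr => i _.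
  by rewrite scaler0 add0r scalerA mulrC.
have key0 : forall d, gen_ideal xs d -> gen_ideal Xs ((d, 0) : R).
  move=> d Hd; have := key d 0 0 Hd (ideal0 (gen_ideal_ideal xs)); by rewrite scale0r.
have fstg : forall z : R, gen_ideal Xs z -> gen_ideal xs z.1.
  move=> _ [rs ->]; exists (fun i => (rs i).1); rewrite te_sum /=.
  by apply: eq_bigr.
move=> X iX XI h hI hl.
pose X' (z : R) := X z.1 /\ gen_ideal Xs z.
pose h' (z : R) : R := (h z.1, 0).
have iG := gen_ideal_ideal Xs.
have iX' : is_ideal X'.
  split; first by split; [exact: (ideal0 iX)|exact: (ideal0 iG)].
  split.
  - move=> x y [Xx Gx] [Xy Gy]; split; first by rewrite fstD; apply: (idealD iX).
    exact: (idealD iG).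
  - move=> r x [Xx Gx]; split; first by rewrite fstM; apply: (idealM _ iX).
    exact: (idealM _ iG).
have X'G : forall z, X' z -> gen_ideal Xs z by move=> z [].
have h'G : forall v, gen_ideal Xs v -> gen_ideal Xs (h' v).
  move=> v Gv; apply: key0; apply/Hxs; apply: hI; apply/Hxs; exact: fstg.
have h'l : forall r v w, gen_ideal Xs v -> gen_ideal Xs w ->
    X' (h' (r * v + w) - (r * h' v + h' w)).
  move=> [r1 r2] [v1 v2] [w1 w2] Gv Gw.
  have Iv : I v1 by apply/Hxs; exact: (fstg _ Gv).
  have Iw : I w1 by apply/Hxs; exact: (fstg _ Gw).
  have -> : h' (((r1, r2) : R) * (v1, v2) + (w1, w2)) - (((r1, r2) : R) * h' (v1, v2) + h' (w1, w2)) =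
      (h (r1 * v1 + w1) - (r1 * h v1 + h w1), h v1 *: (- r2)).
    rewrite /h' /= teM teD; congr (_, _).
    by rewrite /= scaler0 add0r addr0 add0r scalerN.
  split; first exact: hl.
  apply: key; first by apply/Hxs; apply: XI; exact: hl.
  by apply/Hxs; apply: hI.
have [g' [g1 g2 g3]] := qI' X' iX' X'G h' h'G h'l.
exists (fun a => (g' (a, 0)).1); split.
- move=> v Iv; apply/Hxs; apply: fstg; apply: g1; apply: key0; exact/Hxs.
- move=> r v w Iv Iw.
  have -> : ((r * v + w, 0) : R) = ((r, 0) : R) * (v, 0) + (w, 0).
    by rewrite teM teD !scaler0 !addr0.
  rewrite g2; [by []|exact/key0/Hxs|exact/key0/Hxs].
- move=> v Iv; have [] := g3 (v, 0) (key0 _ (proj1 (Hxs v) Iv)).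
  by rewrite fstB.
Qed.

Lemma R1 (P : A -> Prop) : ldata P -> fqp_ring R -> forall (a : A) (e : E),
  (exists f, e = a *: f) \/ (a * a = 0 /\ a *: e = 0).
Proof.
move=> lP fq a e; case: (classic (exists f, e = a *: f)) => [|ne]; [by left|right].
case: (eqVneq a 0) => [->|a0]; first by rewrite mul0r scale0r.
have inc : incomp ((a, 0) : R) (0, e).
  split.
  - case=> [[c1 c2] he]; rewrite teM in he; case: he => _ he; apply: ne.
    by exists c2; rewrite he scaler0 add0r.
  - case=> [[c1 c2] he]; rewrite teM in he; case: he => ha _.
    by rewrite mulr0 in ha; rewrite ha eqxx in a0.
have [xx xy _] := core (ldata_te lP) inc (fqp_span2 fq).
rewrite teM in xx xy; case: xx => -> _; case: xy => _.
by rewrite scaler0 addr0.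
Qed.

Lemma R2 (P : A -> Prop) : ldata P -> fqp_ring A -> forall a b : A,
  (exists c, b = c * a) \/ (exists c, a = c * b) \/ (a * a = 0 /\ a * b = 0).
Proof.
move=> lP fq a b.
case: (classic (exists c, b = c * a)) => [|h1]; [by left|right].
case: (classic (exists c, a = c * b)) => [|h2]; [by left|right].
have [xx xy _] := core lP (conj h1 h2) (fqp_span2 fq).
by split.
Qed.

Lemma nil_kills (P : A -> Prop) : ldata P -> fqp_ring R -> forall (n : A) (e : E),
  nilpotent_elt n -> n *: e = 0.
Proof.
move=> lP fq n e [k hk]; apply: NNPP => ne.
have step : forall e' : E, n *: e' <> 0 -> exists e'' : E, e' = n *: e'' /\ n *: e'' <> 0.
  move=> e' ne'; case: (R1 lP fq n e') => [[f hf]|[_ h0]]; last by [].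
  exists f; split => //; rewrite -hf => e0; apply: ne'; by rewrite e0 scaler0.
have : forall j, exists e' : E, e = n ^+ j *: e' /\ n *: e' <> 0.
  elim=> [|j [e' [he ne']]]; first by exists e; rewrite expr0 scale1r.
  have [e'' [he' ne'']] := step e' ne'; exists e''; split => //.
  by rewrite he he' scalerA -exprSr.
case/(_ k) => e' [he _]; apply: ne; by rewrite he hk scale0r scaler0.
Qed.

Lemma nil_sq (P : A -> Prop) : ldata P -> fqp_ring R -> (exists e : E, e != 0) ->
  forall m : A, nilpotent_elt m -> m * m = 0.
Proof.
move=> lP fq [e0 ne0] m nm; case: (R1 lP fq m e0) => [[f hf]|[-> _]] //.
by move: ne0; rewrite hf (nil_kills lP fq f nm) eqxx.
Qed.

Lemma nil_prod (P : A -> Prop) : ldata P -> fqp_ring R -> (exists e : E, e != 0) ->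
  forall a b : A, nilpotent_elt a -> nilpotent_elt b -> a * b = 0.
Proof.
move=> lP fq ex a b na nb.
have sa := nil_sq lP fq ex na; have sb := nil_sq lP fq ex nb.
case: (R2 lP (fqp_A fq) a b) => [[c ->]|[[c ->]|[_ ->]]] //.
- by rewrite mulrA [a * c]mulrC -mulrA sa mulr0.
- by rewrite -mulrA sb mulr0.
Qed.


Lemma zd_nil (P : A -> Prop) : ldata P -> fqp_ring R -> (exists e : E, e != 0) ->
  forall c d : A, c * d = 0 -> d != 0 -> nilpotent_elt c.
Proof.
move=> lP fq [e ne] c d cd dn; apply: NNPP => nc.
have cc : c * c <> 0 by move=> h; apply: nc; exists 2%N; rewrite expr2.
have cdiv : forall e' : E, exists f, e' = c *: f.
  by move=> e'; case: (R1 lP fq c e') => // [[]].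
have dk : forall e' : E, d *: e' = 0.
  by move=> e'; have [f ->] := cdiv e'; rewrite scalerA mulrC cd scale0r.
have [e1 he1] := cdiv e.
have inc : incomp ((d, 0) : R) (0, e1).
  split.
  - case=> [[k1 k2] h]; rewrite teM in h; case: h => _ h.
    by move: ne; rewrite he1 h scaler0 add0r dk scaler0 eqxx.
  - case=> [[k1 k2] h]; rewrite teM in h; case: h => h _.
    by move: dn; rewrite h mulr0 eqxx.
have [[p1 p2] [[q1 q2] [/= Pp Pq H]]] := ann_swap (ldata_te lP) inc (fqp_span2 fq).
have := H (c, 0); rewrite teM cd !scaler0 addr0 => /(_ erefl).
move/(congr1 snd); rewrite /= !scaler0 !scale0r dk !add0r !addr0.
rewrite -{1}[e1]scale1r -scalerDl scalerA mulrC -scalerA -he1 => h.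
have [v hv] := ldata_unit1 lP Pq.
by move: ne; rewrite -[e]scale1r -hv mulrC -scalerA h scaler0 eqxx.
Qed.


Lemma rmn_nonnil (a : A) : regular_mod_nil a -> ~ nilpotent_elt a.
Proof.
move=> ra na; have := ra 1; rewrite mulr1 => /(_ na) [k].
by rewrite expr1n => /eqP; rewrite oner_eq0.
Qed.

Lemma unit_cancel (P : A -> Prop) (q : A) (e : E) : ldata P -> P q -> (1 + q) *: e = 0 -> e = 0.
Proof.
move=> lP Pq h; have [v hv] := ldata_unit1 lP Pq.
by rewrite -[e]scale1r -hv mulrC -scalerA h scaler0.
Qed.

Lemma unit_cancelA (P : A -> Prop) (q b : A) : ldata P -> P q -> (1 + q) * b = 0 -> b = 0.
Proof.
move=> lP Pq h; have [v hv] := ldata_unit1 lP Pq.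
by rewrite -[b]mul1r -hv [(1 + q) * v]mulrC -mulrA h mulr0.
Qed.

Lemma tor_nil0 (P : A -> Prop) : ldata P -> fqp_ring R -> forall (a : A) (e : E),
  regular_mod_nil a -> e != 0 -> a *: e = 0 -> forall n : A, nilpotent_elt n -> n = 0.
Proof.
move=> lP fq a e ra ne ae n nn; apply: NNPP => n0.
have inc : incomp ((0, e) : R) (n, 0).
  split.
  - case=> [[k1 k2] h]; rewrite teM in h; case: h => h _.
    by apply: n0; rewrite h mulr0.
  - case=> [[k1 k2] h]; rewrite teM in h; case: h => _ h.
    by move: ne; rewrite h scaler0 add0r (nil_kills lP fq k2 nn) eqxx.
have [[p1 p2] [[q1 q2] [/= Pp Pq H]]] := ann_swap (ldata_te lP) inc (fqp_span2 fq).
have := H (a, 0); rewrite teM ae mulr0 scale0r addr0 => /(_ erefl).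
move/(congr1 fst); rewrite /= mulr0 add0r -{1}[n]mul1r -mulrDl => h.
apply: (rmn_nonnil ra); apply: (zd_nil lP fq (ex_intro _ e ne) h).
by apply/eqP => h'; apply: n0; apply: (unit_cancelA lP Pq h').
Qed.

Lemma annE (P : A -> Prop) : ldata P -> fqp_ring R -> forall (f1 f2 : E) (t : A),
  ~ (exists c, f2 = c *: f1) -> ~ (exists c, f1 = c *: f2) -> t *: f1 = 0 -> t *: f2 = 0.
Proof.
move=> lP fq f1 f2 t n21 n12 tf.
have inc : incomp ((0, f1) : R) (0, f2).
  split.
  - case=> [[k1 k2] h]; rewrite teM in h; case: h => _ h.
    by apply: n21; exists k1; rewrite h scale0r addr0.
  - case=> [[k1 k2] h]; rewrite teM in h; case: h => _ h.
    by apply: n12; exists k1; rewrite h scale0r addr0.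
have [[p1 p2] [[q1 q2] [/= Pp Pq H]]] := ann_swap (ldata_te lP) inc (fqp_span2 fq).
have := H (t, 0); rewrite teM tf mulr0 scale0r addr0 => /(_ erefl).
move/(congr1 snd); rewrite /= !scale0r !addr0 !scalerDr !scalerA (mulrC t p1) (mulrC t q1).
rewrite -!scalerA tf scaler0 add0r -{1}[t *: f2]scale1r -scalerDl scaler0 addr0 => h.
exact: (unit_cancel lP Pq h).
Qed.

End Te.


Section Fwd.
Variables (A : comNzRingType) (E : lmodType A).
Local Notation R := (triv_ext E).

Lemma comparable_uniserial :
  (forall f1 f2 : E, (exists c, f1 = c *: f2) \/ (exists c, f2 = c *: f1)) -> uniserial E.
Proof.
move=> cmp S1 S2 [_ [_ sc1]] [_ [_ sc2]].
case: (classic (forall x, S1 x -> S2 x)) => [|n1]; [by left|right].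
move=> x S2x; apply: NNPP => nS1x.
have [y [S1y nS2y]] : exists y, S1 y /\ ~ S2 y.
  apply: NNPP => h; apply: n1 => z S1z; apply: NNPP => nS2z; apply: h; by exists z.
case: (cmp y x) => [[c hc]|[c hc]].
- by apply: nS2y; rewrite hc; apply: sc2.
- by apply: nS1x; rewrite hc; apply: sc1.
Qed.

Lemma tor_aux (P : A -> Prop) : ldata P -> fqp_ring R -> forall (u v e : E) (r k : A),
  ~ (exists c, v = c *: u) -> ~ (exists c, u = c *: v) -> e != 0 ->
  e = r *: u -> e = (r * k) *: v -> False.
Proof.
move=> lP fq u v e r k nvu nuv ne eu ev.
have [iP n1 un] := lP.
pose z := u - k *: v.
have rz : r *: z = 0 by rewrite /z scalerBr scalerA -eu -ev subrr.
have nvz : ~ (exists c, v = c *: z).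
  case=> c hc.
  have hc' : c *: u = (1 + c * k) *: v.
    by rewrite scalerDl scale1r [in X in X + _]hc /z scalerBr scalerA subrK.
  case: (classic (P (1 + c * k))) => [P1|nP1].
  - have nPc : ~ P c.
      move=> Pc; apply: n1; have := idealB iP P1 (idealMr k iP Pc); by rewrite addrK.
    have [w hw] := un _ nPc.
    apply: nuv; exists (w * (1 + c * k)).
    by rewrite -scalerA -hc' scalerA mulrC hw scale1r.
  - have [w hw] := un _ nP1.
    apply: nvu; exists (w * c).
    by rewrite -scalerA hc' scalerA mulrC hw scale1r.
have nzv : ~ (exists c, z = c *: v).
  case=> c hc; apply: nuv; exists (c + k).
  by rewrite scalerDl -hc /z subrK.
have rv := annE lP fq nvz nzv rz.
by move: ne; rewrite ev mulrC -scalerA rv scaler0 eqxx.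
Qed.

Lemma tor_uniserial (P : A -> Prop) : ldata P -> fqp_ring R ->
  (forall a b : A, (exists c, b = a * c) \/ (exists c, a = b * c)) ->
  (forall a : A, a != 0 -> forall e : E, exists f, e = a *: f) ->
  forall (a : A) (e : E), a != 0 -> e != 0 -> a *: e = 0 -> uniserial E.
Proof.
move=> lP fq val dv a e a0 ne ae; apply: comparable_uniserial => f1 f2.
apply: NNPP => nc.
have n12 : ~ (exists c, f1 = c *: f2) by move=> h; apply: nc; left.
have n21 : ~ (exists c, f2 = c *: f1) by move=> h; apply: nc; right.
have [g1 hg1] := dv a a0 f1; have [g2 hg2] := dv a a0 f2.
have m12 : ~ (exists c, g1 = c *: g2).
  by case=> c hc; apply: n12; exists c; rewrite hg1 hg2 hc !scalerA mulrC.
have m21 : ~ (exists c, g2 = c *: g1).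
  by case=> c hc; apply: n21; exists c; rewrite hg1 hg2 hc !scalerA mulrC.
have f10 : f1 <> 0 by move=> h; apply: n12; exists 0; rewrite h scale0r.
have f20 : f2 <> 0 by move=> h; apply: n21; exists 0; rewrite h scale0r.
have cl : forall g f : E, f = a *: g -> f <> 0 -> exists r, e = r *: g.
  move=> g f hf f0; apply: NNPP => nr.
  case: (classic (exists c, g = c *: e)) => [[c hc]|nge].
  - by apply: f0; rewrite hf hc scalerA mulrC -scalerA ae scaler0.
  - by apply: f0; rewrite hf; apply: (annE lP fq nge nr ae).
have [r1 hr1] := cl g1 f1 hg1 f10; have [r2 hr2] := cl g2 f2 hg2 f20.
case: (val r1 r2) => [[k hk]|[k hk]].
- exact: (tor_aux lP fq m21 m12 ne hr1 (etrans hr2 (congr1 (fun t => t *: g2) hk))).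
- exact: (tor_aux lP fq m12 m21 ne hr2 (etrans hr1 (congr1 (fun t => t *: g1) hk))).
Qed.

Lemma forward : local_ring A -> (exists e : E, e != 0) -> fqp_ring R ->
  fqp_ring A /\
   ((valuation_domain A /\ divisible E /\ uniserial E) \/
    [/\ (forall (a : A) (e : E), nilpotent_elt a -> a *: e = 0),
        divisible_mod_nil E /\ torsionfree_mod_nil E,
        (forall a : A, zero_divisor a -> nilpotent_elt a) &
        (forall a b : A, nilpotent_elt a -> nilpotent_elt b -> a * b = 0)]).
Proof.
move=> loc ex fq; have [P lP] := local_ldata loc.
have fqA := fqp_A fq; split => //.
have div_nn : forall a : A, ~ nilpotent_elt a -> forall e : E, exists f, e = a *: f.
  move=> a na e; case: (R1 lP fq a e) => // [[aa _]]; exfalso; apply: na.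
  by exists 2%N; rewrite expr2.
case: (classic (torsionfree_mod_nil E)) => [tf|ntf].
- right; split.
  + by move=> a e na; exact: (nil_kills lP fq e na).
  + by split => // a ra e; exact: (div_nn _ (rmn_nonnil ra) e).
  + by move=> a [b [bn ab]]; exact: (zd_nil lP fq ex ab bn).
  + exact: (nil_prod lP fq ex).
- left.
  have [a [e [ra ae ne]]] : exists a (e : E), [/\ regular_mod_nil a, a *: e = 0 & e != 0].
    apply: NNPP => h; apply: ntf => a e ra ae; apply: NNPP => ne; apply: h.
    by exists a, e; split => //; apply/eqP.
  have N0 := tor_nil0 lP fq ra ne ae.
  have dom : forall a b : A, a * b = 0 -> a = 0 \/ b = 0.
    move=> x y xy; case: (eqVneq y 0) => [->|y0]; [by right|left].
    exact: N0 (zd_nil lP fq ex xy y0).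
  have val : forall a b : A, (exists c, b = a * c) \/ (exists c, a = b * c).
    move=> x y; case: (R2 lP fqA x y) => [[c ->]|[[c ->]|[xx _]]].
    - by left; exists c; rewrite mulrC.
    - by right; exists c; rewrite mulrC.
    - have -> : x = 0 by apply: N0; exists 2%N; rewrite expr2.
      by right; exists 0; rewrite mulr0.
  have a0 : a != 0.
    by apply/eqP => a0; apply: (rmn_nonnil ra); exists 1%N; rewrite expr1.
  have dvz : forall b : A, b != 0 -> forall e : E, exists f, e = b *: f.
    by move=> b b0; apply: div_nn => nb; move/eqP: b0; apply; apply: N0.
  split; first by split.
  split.
  + move=> b rb e'; apply: dvz; apply/eqP => b0.
    by have := rb 1; rewrite b0 mul0r => /(_ erefl) /eqP; rewrite oner_eq0.
  + exact: (tor_uniserial lP fq val dvz a0 ne ae).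
Qed.

End Fwd.


Section Case1.
Variables (A : comNzRingType) (E : lmodType A).
Local Notation R := (triv_ext E).

Lemma case1_chained : valuation_domain A -> divisible E -> uniserial E -> chained R.
Proof.
move=> [dom val] dv us.
have sub : forall g : E, is_submodule (fun z : E => exists r : A, z = r *: g).
  move=> g; split; first by exists 0; rewrite scale0r.
  split; first by move=> _ _ [r ->] [s ->]; exists (r + s); rewrite scalerDl.
  by move=> t _ [r ->]; exists (t * r); rewrite scalerA.
have dir : forall x y : R, (exists c, y.1 = x.1 * c) ->
    (exists c, y = c * x) \/ (exists c, x = c * y).
  move=> [a e] [b f] /= [c hc].
  case: (eqVneq a 0) => [a0|a0].
  - have b0 : b = 0 by rewrite hc a0 mul0r.
    case: (us _ _ (sub e) (sub f)) => H.
    + have [r hr] := H e (ex_intro _ 1 (esym (scale1r e))).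
      by right; exists (r, 0); rewrite a0 b0 teM mulr0 scaler0 addr0 -hr.
    + have [r hr] := H f (ex_intro _ 1 (esym (scale1r f))).
      by left; exists (r, 0); rewrite a0 b0 teM mulr0 scaler0 addr0 -hr.
  - have ra : regular a.
      by move=> z az; case: (dom _ _ az) => // a0'; move: a0; rewrite a0' eqxx.
    have [g hg] := dv a ra (f - c *: e).
    left; exists (c, g); rewrite teM -hg mulrC -hc; congr (_, _).
    by rewrite addrC subrK.
move=> x y; case: (val x.1 y.1) => [h|[c hc]]; first exact: dir.
have [h'|h'] := dir y x (ex_intro _ c hc); [by right|by left].
Qed.

End Case1.

Section Case2.
Variables (A : comNzRingType) (E : lmodType A) (P : A -> Prop).
Local Notation R := (triv_ext E).
Local Notation nil := nilpotent_elt.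
Hypotheses (lP : ldata P) (fqA : fqp_ring A)
  (NE : forall (a : A) (e : E), nilpotent_elt a -> a *: e = 0)
  (dmn : divisible_mod_nil E) (tmn : torsionfree_mod_nil E)
  (ZN : forall a : A, zero_divisor a -> nilpotent_elt a)
  (N2 : forall a b : A, nilpotent_elt a -> nilpotent_elt b -> a * b = 0).

Lemma nn_reg (a : A) : ~ nil a -> forall b, a * b = 0 -> b = 0.
Proof.
move=> na b ab; apply: NNPP => bn; apply: na; apply: ZN; exists b; split => //.
exact/eqP.
Qed.

Lemma nn_pow (a : A) k : ~ nil a -> ~ nil (a ^+ k).
Proof. by move=> na [m hm]; apply: na; exists (k * m)%N; rewrite exprM. Qed.

Lemma nn_rmn (a : A) : ~ nil a -> regular_mod_nil a.
Proof.
move=> na b [k hk]; exists k; rewrite exprMn in hk.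
exact: (nn_reg (@nn_pow a k na) hk).
Qed.

Lemma nil_add (a b : A) : nil a -> nil b -> nil (a + b).
Proof.
move=> na nb; exists 2%N.
by rewrite expr2 mulrDl !mulrDr (N2 na na) (N2 na nb) (N2 nb na) (N2 nb nb) !addr0.
Qed.

Lemma nil_mull (a b : A) : nil b -> nil (a * b).
Proof. by move=> [k hk]; exists k; rewrite exprMn hk mulr0. Qed.

Lemma cmp_nn (a b : A) : ~ nil a -> ~ nil b -> (exists c, b = c * a) \/ (exists c, a = c * b).
Proof.
move=> na nb; case: (R2 lP fqA a b) => [|[|[aa _]]]; [by left|by right|].
by exfalso; apply: na; exists 2%N; rewrite expr2.
Qed.

Lemma div_nil (a n : A) : ~ nil a -> nil n -> exists c, n = c * a.
Proof.
move=> na nn; case: (R2 lP fqA a n) => [//|[[c hc]|[aa _]]].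
- exfalso; apply: na; exists 2%N.
  by rewrite expr2 hc mulrACA (N2 nn nn) mulr0.
- by exfalso; apply: na; exists 2%N; rewrite expr2.
Qed.

Lemma minsel (I : eqType) (s : seq I) (f : I -> A) :
  (exists i, i \in s /\ ~ nil (f i)) ->
  exists j, [/\ j \in s, ~ nil (f j) & forall i, i \in s -> exists d, f i = d * f j].
Proof.
elim: s => [[i [] //]|x s IH] ex.
case: (classic (exists i, i \in s /\ ~ nil (f i))) => [ex'|nex'].
- have [j [js nj hj]] := IH ex'.
  case: (classic (nil (f x))) => [nx|nx].
  + exists j; split; [by rewrite inE js orbT | done |].
    move=> i; rewrite inE => /orP [/eqP ->|iins]; [exact: div_nil nj nx| exact: hj].
  + case: (cmp_nn nj nx) => [[c hc]|[c hc]].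
    * exists j; split; [by rewrite inE js orbT|done|].
      move=> i; rewrite inE => /orP [/eqP ->|iins]; [by exists c|exact: hj].
    * exists x; split; [by rewrite inE eqxx|done|].
      move=> i; rewrite inE => /orP [/eqP ->|iins]; first by exists 1; rewrite mul1r.
      have [d hd] := hj i iins; exists (d * c); by rewrite hd hc mulrA.
- have nx : ~ nil (f x).
    case: ex => i [iin ni]; move: iin; rewrite inE => /orP [/eqP <-//|iins].
    by exfalso; apply: nex'; exists i.
  exists x; split; [by rewrite inE eqxx|done|].
  move=> i; rewrite inE => /orP [/eqP ->|iins]; first by exists 1; rewrite mul1r.
  apply: div_nil nx _; apply: NNPP => ni; apply: nex'; by exists i.
Qed.

Definition nilR (x : R) := nil x.1.

Lemma nilR_mul0 (x y : R) : nilR x -> nilR y -> x * y = 0.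
Proof.
case: x => a e; case: y => b f; rewrite /nilR /= => na nb.
by rewrite teM (N2 na nb) (NE f na) (NE e nb) addr0.
Qed.

Lemma nilR_scal (r x : R) : nilR x -> r * x = ((r.1, 0) : R) * x.
Proof. by case: r => r1 r2; case: x => a e; rewrite /nilR /= => na; rewrite !teM (NE r2 na) scaler0. Qed.

Lemma tfR (a : A) (z : R) : ~ nil a -> ((a, 0) : R) * z = 0 -> z = 0.
Proof.
case: z => z1 z2 na; rewrite teM scaler0 addr0 te0 => -[h1 h2].
by rewrite (nn_reg na h1) (tmn (nn_rmn na) h2).
Qed.

Lemma gen_nilR n (Xs : 'I_n -> R) y : (forall i, nilR (Xs i)) -> gen_ideal Xs y -> nilR y.
Proof.
move=> nX [rs ->]; rewrite /nilR.
have -> : (\sum_(i < n) rs i * Xs i).1 = \sum_(i < n) (rs i * Xs i).1 by rewrite te_sum.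
apply: (@big_ind A (fun x => nil x)); [by exists 1%N; rewrite expr1|exact: nil_add|].
move=> i _; exact: nil_mull (nX i).
Qed.


Lemma case_principal n (Xs : 'I_n -> R) : (exists i, ~ nilR (Xs i)) ->
  exists z, forall y, gen_ideal Xs y <-> pspan z y.
Proof.
case=> i0 ni0.
have ex0 : exists i, i \in enum 'I_n /\ ~ nil (Xs i).1 by exists i0; rewrite mem_enum.
have [j [_ nj hj]] := minsel ex0.
exists (Xs j); apply: gen_pspan (gen_mem Xs j) => i.
have [d hd] := hj i (mem_enum _ i).
case E1 : (Xs i) hd => [ai ei]; case E2 : (Xs j) nj => [aj ej] /= nj hd.
have [g hg] := dmn (nn_rmn nj) (ei - d *: ej).
by exists (d, g); rewrite teM -hg -hd addrC subrK.
Qed.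

Lemma qp_free m (Bs : 'I_m -> R) : (forall i, nilR (Bs i)) ->
  (forall rs : 'I_m -> R, \sum_(i < m) rs i * Bs i = 0 -> forall i, nilR (rs i)) ->
  quasi_projective (gen_ideal Bs).
Proof.
move=> nB ind X iX XV h hV hl.
have iG := gen_ideal_ideal Bs.
have cfP v : exists rs : 'I_m -> R, gen_ideal Bs v -> v = \sum_(i < m) rs i * Bs i.
  by case: (classic (gen_ideal Bs v)) => [[rs ->]|nv]; [exists rs|exists (fun=> 0)].
pose cf v := proj1_sig (constructive_indefinite_description _ (cfP v)).
have cfE v : gen_ideal Bs v -> v = \sum_(i < m) cf v i * Bs i :=
  proj2_sig (constructive_indefinite_description _ (cfP v)).
have hB : forall i, gen_ideal Bs (h (Bs i)) by move=> i; apply: hV; apply: gen_mem.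
have eqsum : forall rs rs' : 'I_m -> R, \sum_(i < m) rs i * Bs i = \sum_(i < m) rs' i * Bs i ->
    \sum_(i < m) rs i * h (Bs i) = \sum_(i < m) rs' i * h (Bs i).
  move=> rs rs' e.
  have d0 : \sum_(i < m) (rs i - rs' i) * Bs i = 0.
    rewrite (eq_bigr (fun i => rs i * Bs i - rs' i * Bs i)); last by move=> i _; rewrite mulrBl.
    by rewrite sumrB e subrr.
  apply/eqP; rewrite -subr_eq0 -sumrB; apply/eqP; apply: big1 => i _.
  rewrite -mulrBl nilR_mul0 //; first exact: ind d0 i.
  exact: gen_nilR nB (hB i).
have hsum : forall rs : 'I_m -> R,
    X (h (\sum_(i < m) rs i * Bs i) - \sum_(i < m) rs i * h (Bs i)).
  move=> rs.
  have : gen_ideal Bs (\sum_(i < m) rs i * Bs i) /\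
         X (h (\sum_(i < m) rs i * Bs i) - \sum_(i < m) rs i * h (Bs i)).
    apply: (big_rec2 (fun y1 y2 => gen_ideal Bs y1 /\ X (h y1 - y2))).
    - by split; [exact: (ideal0 iG)|rewrite subr0; exact: (h0X iX (ideal0 iG) hl)].
    - move=> i y1 y2 _ [G1 X1]; split.
      + exact: (idealD iG (idealM _ iG (gen_mem Bs i)) G1).
      + have -> : h (rs i * Bs i + y1) - (rs i * h (Bs i) + y2) =
            (h (rs i * Bs i + y1) - (rs i * h (Bs i) + h y1)) + (h y1 - y2) by ring.
        exact: (idealD iX (hl _ _ _ (gen_mem Bs i) G1) X1).
  by case.
exists (fun v => \sum_(i < m) cf v i * h (Bs i)); split.
- move=> v _; apply: (ideal_sum iG) => i; exact: (idealM _ iG (hB i)).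
- move=> r v w Vv Vw.
  have Vrvw : gen_ideal Bs (r * v + w) := idealD iG (idealM r iG Vv) Vw.
  rewrite (eqsum _ (fun i => r * cf v i + cf w i)).
  + by rewrite mulr_sumr -big_split /=; apply: eq_bigr => i _; rewrite mulrDl mulrA.
  + rewrite -(cfE _ Vrvw).
    rewrite (eq_bigr (fun i => r * (cf v i * Bs i) + cf w i * Bs i)); last first.
      by move=> i _; rewrite mulrDl mulrA.
    by rewrite big_split /= -mulr_sumr -(cfE _ Vv) -(cfE _ Vw).
- move=> v Vv; have := hsum (cf v); rewrite -(cfE _ Vv) => Xd.
  by rewrite -opprB; exact: (idealN iX Xd).
Qed.

Lemma free_gen n (Xs : 'I_n -> R) : (forall i, nilR (Xs i)) ->
  exists m (Bs : 'I_m -> R), [/\ forall i, nilR (Bs i),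
    forall y, gen_ideal Xs y <-> gen_ideal Bs y &
    forall rs : 'I_m -> R, \sum_(i < m) rs i * Bs i = 0 -> forall i, nilR (rs i)].
Proof.
elim: n Xs => [|n IH] Xs nX.
  by exists 0%N, Xs; split => // rs _ [].
case: (classic (forall rs : 'I_n.+1 -> R, \sum_(i < n.+1) rs i * Xs i = 0 ->
    forall i, nilR (rs i))) => [ind|nind].
  by exists n.+1, Xs; split.
have [rs [s0 [i0 ni0]]] : exists rs : 'I_n.+1 -> R,
    \sum_(i < n.+1) rs i * Xs i = 0 /\ exists i, ~ nilR (rs i).
  apply: NNPP => h; apply: nind => rs s0 i; apply: NNPP => ni; apply: h.
  by exists rs; split => //; exists i.
have ex0 : exists i, i \in enum 'I_n.+1 /\ ~ nil (rs i).1 by exists i0; rewrite mem_enum.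
have [j [_ nj hj]] := minsel ex0.
have dP : forall i, exists d, (rs i).1 = d * (rs j).1 by move=> i; apply: hj; rewrite mem_enum.
pose d i := proj1_sig (constructive_indefinite_description _ (dP i)).
have hd i : (rs i).1 = d i * (rs j).1 := proj2_sig (constructive_indefinite_description _ (dP i)).
set aj := (rs j).1 in nj hd.
have s1 : ((aj, 0) : R) * (\sum_(i < n.+1) ((d i, 0) : R) * Xs i) = 0.
  rewrite mulr_sumr; transitivity (\sum_(i < n.+1) rs i * Xs i); last exact: s0.
  apply: eq_bigr => i _.
  rewrite (nilR_scal (rs i) (nX i)) hd mulrA; congr (_ * _).
  by rewrite teM mulrC !scaler0 addr0.
have s2 := tfR nj s1.
have dj : d j = 1.
  apply/eqP; rewrite eq_sym -subr_eq0; apply/eqP; apply: (nn_reg nj).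
  by rewrite mulrBr mulr1 mulrC -hd subrr.
have xj : Xs j = - \sum_(k < n) ((d (lift j k), 0) : R) * Xs (lift j k).
  move: s2; rewrite (bigD1_ord j) //= dj -te1 mul1r => /eqP; rewrite addr_eq0 => /eqP.
  by [].
pose Ys k := Xs (lift j k).
have [m [Bs [nB eqB indB]]] := IH Ys (fun k => nX _).
exists m, Bs; split => // y; rewrite -eqB; split.
- apply: gen_incl => i; case: (unliftP j i) => [k ->|->]; first exact: (gen_mem Ys k).
  rewrite xj; apply: (idealN (gen_ideal_ideal Ys)); apply: ideal_sum (gen_ideal_ideal Ys) _ => k.
  exact: (idealM _ (gen_ideal_ideal Ys) (gen_mem Ys k)).
- by apply: gen_incl => k; exact: (gen_mem Xs (lift j k)).
Qed.

Lemma fqp_case2 : fqp_ring R.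
Proof.
move=> I [n [Xs HI]].
case: (classic (exists i, ~ nilR (Xs i))) => [ex|nex].
- have [z hz] := case_principal ex.
  apply: (@qp_ext _ (pspan z)); last exact: qp_principal.
  by move=> y; split => [/hz/HI|/HI/hz].
- have nX : forall i, nilR (Xs i) by move=> i; apply: NNPP => ni; apply: nex; exists i.
  have [m [Bs [nB eqB indB]]] := free_gen nX.
  apply: (@qp_ext _ (gen_ideal Bs)); last exact: qp_free nB indB.
  by move=> y; split => [/eqB/HI|/HI/eqB].
Qed.

End Case2.

Theorem theorem4p2 (A : comNzRingType) (E : lmodType A) :
  local_ring A -> (exists e : E, e != 0) ->
  (fqp_ring (triv_ext E) <->
   fqp_ring A /\
   ((valuation_domain A /\ divisible E /\ uniserial E) \/
    [/\ (forall (a : A) (e : E), nilpotent_elt a -> a *: e = 0),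
        divisible_mod_nil E /\ torsionfree_mod_nil E,
        (forall a : A, zero_divisor a -> nilpotent_elt a) &
        (forall a b : A, nilpotent_elt a -> nilpotent_elt b -> a * b = 0)])).
Proof.
move=> loc ex; split; first exact: forward loc ex.
case=> fqA [[vd [dv us]]|[NE [dmn tmn] ZN N2]].
- exact: chained_fqp (case1_chained vd dv us).
- have [P lP] := local_ldata loc; exact: (fqp_case2 lP fqA NE dmn tmn ZN N2).
Qed.
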